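(* Let $\kappa$ be an infinite cardinal and let $\mathscr{U}$ be a uniform ultrafilter over $\kappa$ with ${\rm Ch}(\mathscr{U})=\mu$. Then $\operatorname{cf}(\mu)>\omega$. Consequently $\operatorname{cf}(\mathfrak{u}_\kappa)>\omega$ for every infinite cardinal $\kappa$.
   Context: An ultrafilter $\mathscr{U}$ over $\kappa$ is uniform if every element of $\mathscr{U}$ has cardinality $\kappa$. A base for $\mathscr{U}$ is a collection $\mathcal{B}\subseteq\mathscr{U}$ such that every $A\in\mathscr{U}$ contains some $B\in\mathcal{B}$; ${\rm Ch}(\mathscr{U})$ is the minimal cardinality of a base for $\mathscr{U}$. The ultrafilter number $\mathfrak{u}_\kappa$ is the minimum of ${\rm Ch}(\mathscr{U})$ over all uniform ultrafilters $\mathscr{U}$ over $\kappa$. *)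

(* Defs.v *)
(* cardinals are represented by types, compared via injections.
   Subsets of kappa are predicates K -> Prop. *)
From Stdlib Require Import Classical.

Definition injective {X Y : Type} (f : X -> Y) : Prop :=
  forall x y, f x = f y -> x = y.

Definition le_card (X Y : Type) : Prop := exists f : X -> Y, injective f.
Definition lt_card (X Y : Type) : Prop := le_card X Y /\ ~ le_card Y X.

Definition infinite_type (X : Type) : Prop := le_card nat X.

(* cf(|M|) > omega, for the cardinal |M|: |M| is infinite (so cf(|M|) >= omega)
   and |M| is not the union of countably many subsets of cardinality < |M|
   (which, for infinite |M|, is exactly the failure of cf(|M|) = omega). *)
Definition cf_gt_omega (M : Type) : Prop :=
  infinite_type M /\
  forall P : nat -> M -> Prop,
    (forall n, lt_card {m : M | P n m} M) ->
    ~ (forall m : M, exists n, P n m).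

Definition ultrafilter {K : Type} (U : (K -> Prop) -> Prop) : Prop :=
  U (fun _ => True) /\
  ~ U (fun _ => False) /\
  (forall A B : K -> Prop, U A -> (forall x, A x -> B x) -> U B) /\
  (forall A B : K -> Prop, U A -> U B -> U (fun x => A x /\ B x)) /\
  (forall A : K -> Prop, U A \/ U (fun x => ~ A x)).

Definition uniform {K : Type} (U : (K -> Prop) -> Prop) : Prop :=
  forall A, U A -> le_card K {x : K | A x}.

Definition is_base {K : Type} (U : (K -> Prop) -> Prop)
    (B : (K -> Prop) -> Prop) : Prop :=
  (forall A, B A -> U A) /\
  (forall A, U A -> exists C, B C /\ forall x, C x -> A x).

(* B is a base for U of minimal cardinality, i.e. |B| = Ch(U) *)
Definition min_base {K : Type} (U : (K -> Prop) -> Prop)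
    (B : (K -> Prop) -> Prop) : Prop :=
  is_base U B /\
  forall B', is_base U B' -> le_card {A | B A} {A | B' A}.

(* B is a base of some uniform ultrafilter U with |B| = u_kappa *)
Definition witnesses_u {K : Type} (U : (K -> Prop) -> Prop)
    (B : (K -> Prop) -> Prop) : Prop :=
  ultrafilter U /\ uniform U /\ is_base U B /\
  forall U' B' : (K -> Prop) -> Prop, ultrafilter U' -> uniform U' -> is_base U' B' ->
    le_card {A | B A} {A | B' A}.

(* Main.v *)
Require Import Defs.
From Stdlib Require Import Classical ClassicalEpsilon ProofIrrelevance Arith Lia.

Lemma sig_eq_pi {T : Type} (Q : T -> Prop) (s t : {x | Q x}) :
  proj1_sig s = proj1_sig t -> s = t.
Proof.
  destruct s as [x hx], t as [y hy]; simpl; intro E; subst y.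
  f_equal; apply proof_irrelevance.
Qed.

Lemma step_lemma (K : Type) (U B : (K -> Prop) -> Prop)
  (HU : ultrafilter U) (HB : is_base U B)
  (Hmin : forall B', is_base U B' -> le_card {A | B A} {A | B' A})
  (Q : {A | B A} -> Prop) (HQ : ~ le_card {A | B A} {m | Q m})
  (S : K -> Prop) (HS : U S) :
  exists S', U S' /\ (forall x, S' x -> S x) /\
    forall m, Q m -> ~ (forall x, proj1_sig m x /\ S x -> S' x).
Proof.
  apply NNPP; intro Hno.
  destruct HU as [UT [UF [Umono [Uint Uult]]]].
  set (B' := fun X : K -> Prop => exists m, Q m /\ X = (fun x => proj1_sig m x /\ S x)).
  assert (Hb : is_base U B').
  { split.
    - intros X [m [_ ->]]. apply Uint; [apply (proj1 HB); exact (proj2_sig m) | exact HS].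
    - intros A HA. apply NNPP; intro Hn. apply Hno.
      exists (fun x => A x /\ S x). split; [apply Uint; auto|]. split; [tauto|].
      intros m Qm Hsub. apply Hn. exists (fun x => proj1_sig m x /\ S x). split.
      + exists m; auto.
      + intros x Hx. apply (Hsub x Hx). }
  destruct (Hmin B' Hb) as [f Hf].
  apply HQ.
  exists (fun a => let (m, Hm) := constructive_indefinite_description _ (proj2_sig (f a)) in (exist _ m (proj1 Hm) : {m | Q m})).
  intros a b.
  destruct (constructive_indefinite_description _ (proj2_sig (f a))) as [ma [Qa Ea]].
  destruct (constructive_indefinite_description _ (proj2_sig (f b))) as [mb [Qb Eb]].
  intro H. apply (f_equal (@proj1_sig _ _)) in H. simpl in H. subst mb.
  apply Hf. apply sig_eq_pi. rewrite Ea, Eb. reflexivity.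
Qed.

Lemma main_cf (K : Type) (U B : (K -> Prop) -> Prop)
  (HU : ultrafilter U) (HB : is_base U B)
  (Hmin : forall B', is_base U B' -> le_card {A | B A} {A | B' A})
  (P : nat -> {A | B A} -> Prop)
  (HP : forall n, lt_card {m | P n m} {A | B A}) :
  ~ (forall m, exists n, P n m).
Proof.
  intro Hcov.
  assert (stepex : forall n (s : {S | U S}), exists S', U S' /\ (forall x, S' x -> proj1_sig s x) /\
    forall m, P n m -> ~ (forall x, proj1_sig m x /\ proj1_sig s x -> S' x)).
  { intros n s. apply (step_lemma K U B HU HB Hmin (P n) (proj2 (HP n))). exact (proj2_sig s). }
  assert (Hf : exists F : nat -> {S | U S} -> {S | U S}, forall n s,
     (forall x, proj1_sig (F n s) x -> proj1_sig s x) /\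
     forall m, P n m -> ~ (forall x, proj1_sig m x /\ proj1_sig s x -> proj1_sig (F n s) x)).
  { exists (fun n s => let H := constructive_indefinite_description _ (stepex n s) in
              exist _ (proj1_sig H) (proj1 (proj2_sig H))).
    intros n s. simpl.
    destruct (proj2_sig (constructive_indefinite_description _ (stepex n s))) as [_ [h1 h2]].
    split; assumption. }
  destruct Hf as [F HF].
  destruct HU as [UT [UF [Umono [Uint Uult]]]].
  pose (sq := fix sq (k : nat) : {S | U S} :=
          match k with 0 => exist _ (fun _ => True) UT | S k => F (Nat.div2 k) (sq k) end).
  assert (Hsq : forall k, sq (S k) = F (Nat.div2 k) (sq k)) by reflexivity.
  assert (Hdec : forall i j, i <= j -> forall x, proj1_sig (sq j) x -> proj1_sig (sq i) x).
  { intros i j Hij. induction Hij; intros x Hx; auto.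
    apply IHHij. rewrite Hsq in Hx. apply (proj1 (HF _ _)) in Hx. exact Hx. }
  pose (D := fun n x => proj1_sig (sq n) x /\ ~ proj1_sig (sq (S n)) x).
  assert (Hdisj : forall i j x, i < j -> D i x -> D j x -> False).
  { intros i j x Hij [_ Hi] [Hj _]. apply Hi. apply (Hdec (S i) j); auto. }
  assert (Hmeet : forall k m, P (Nat.div2 k) m -> exists x, proj1_sig m x /\ D k x).
  { intros k m Hm. pose proof (proj2 (HF (Nat.div2 k) (sq k)) m Hm) as H.
    rewrite <- Hsq in H.
    apply NNPP; intro Hn. apply H. intros x [Hx1 Hx2]. apply NNPP; intro Hx3.
    apply Hn. exists x. unfold D. auto. }
  assert (Hall : forall E : K -> Prop, (forall n m, P n m -> exists x, proj1_sig m x /\ E x) -> U E).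
  { intros E HE. destruct (Uult E) as [h | h]; [exact h|].
    destruct (proj2 HB _ h) as [C [HC HCs]].
    destruct (Hcov (exist _ C HC)) as [n Hn].
    destruct (HE n _ Hn) as [x [Hx1 Hx2]]. simpl in Hx1. exfalso. exact (HCs x Hx1 Hx2). }
  assert (HEv : U (fun x => exists n, D (2 * n) x)).
  { apply Hall. intros n m Hm. rewrite <- (Nat.div2_double n) in Hm.
    destruct (Hmeet _ _ Hm) as [x [h1 h2]]. exists x. split; [exact h1|]. exists n; exact h2. }
  assert (HOd : U (fun x => exists n, D (S (2 * n)) x)).
  { apply Hall. intros n m Hm. rewrite <- (Nat.div2_succ_double n) in Hm.
    destruct (Hmeet _ _ Hm) as [x [h1 h2]]. exists x. split; [exact h1|]. exists n; exact h2. }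
  pose proof (Uint _ _ HEv HOd) as Hboth.
  apply UF. apply (Umono _ _ Hboth).
  intros x [[n Hn] [k Hk]].
  destruct (Nat.lt_ge_cases (2 * n) (S (2 * k))) as [H | H].
  - exact (Hdisj _ _ _ H Hn Hk).
  - assert (H' : S (2 * k) < 2 * n) by lia. exact (Hdisj _ _ _ H' Hk Hn).
Qed.

Lemma base_infinite (K : Type) (U B : (K -> Prop) -> Prop)
  (HK : infinite_type K) (HU : ultrafilter U) (Hunif : uniform U) (HB : is_base U B) :
  infinite_type {A | B A}.
Proof.
  destruct HU as [UT [UF [Umono [Uint Uult]]]].
  assert (Hsing : forall x, ~ U (fun y => y = x)).
  { intros x Hx. destruct (Hunif _ Hx) as [f Hf]. destruct HK as [g Hg].
    assert (E : f (g 0) = f (g 1)) by (apply sig_eq_pi; rewrite (proj2_sig (f (g 0))), (proj2_sig (f (g 1))); reflexivity).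
    apply Hf, Hg in E. discriminate E. }
  assert (Hstep : forall I : {I | U I}, exists p : K * (K -> Prop),
     proj1_sig I (fst p) /\ B (snd p) /\ forall y, snd p y -> proj1_sig I y /\ y <> fst p).
  { intros [I HI]. simpl.
    assert (Hne : exists x, I x).
    { apply NNPP; intro Hn. apply UF. apply (Umono _ _ HI). intros x Hx. apply Hn. exists x; exact Hx. }
    destruct Hne as [x Hx].
    destruct (Uult (fun y => y = x)) as [h | h]; [exfalso; exact (Hsing x h)|].
    destruct (proj2 HB _ (Uint _ _ HI h)) as [C [HC HCs]].
    exists (x, C). simpl. split; [exact Hx|]. split; [exact HC|]. intros y Hy. exact (HCs y Hy). }
  pose (G := fun I => proj1_sig (constructive_indefinite_description _ (Hstep I))).
  assert (HG : forall I, proj1_sig I (fst (G I)) /\ B (snd (G I)) /\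
                 forall y, snd (G I) y -> proj1_sig I y /\ y <> fst (G I)).
  { intro I. unfold G. exact (proj2_sig (constructive_indefinite_description _ (Hstep I))). }
  pose (nxt := fun I => exist U (snd (G I)) (proj1 HB _ (proj1 (proj2 (HG I))))).
  pose (sq := fix sq (k : nat) : {S | U S} :=
          match k with 0 => exist _ (fun _ => True) UT | S k => nxt (sq k) end).
  assert (Hdec : forall i j, i <= j -> forall x, proj1_sig (sq j) x -> proj1_sig (sq i) x).
  { intros i j Hij. induction Hij; intros x Hx; auto.
    apply IHHij. simpl in Hx. exact (proj1 (proj2 (proj2 (HG _)) x Hx)). }
  exists (fun n => exist B (snd (G (sq n))) (proj1 (proj2 (HG (sq n))))).
  assert (Hlt : forall a b, a < b -> snd (G (sq a)) <> snd (G (sq b))).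
  { intros a b Hab E.
    pose proof (proj1 (HG (sq b))) as Hx.
    apply (Hdec (S a) b Hab) in Hx. simpl in Hx. rewrite E in Hx.
    exact (proj2 (proj2 (proj2 (HG (sq b))) _ Hx) eq_refl). }
  intros a b E. apply (f_equal (@proj1_sig _ _)) in E. simpl in E.
  destruct (Nat.lt_total a b) as [H | [H | H]]; auto.
  - exfalso; exact (Hlt _ _ H E).
  - exfalso; exact (Hlt _ _ H (eq_sym E)).
Qed.

Theorem mainTheorem2 :
  (forall (K : Type) (U : (K -> Prop) -> Prop) (B : (K -> Prop) -> Prop),
      infinite_type K -> ultrafilter U -> uniform U -> min_base U B ->
      cf_gt_omega {A | B A}) /\
  (forall (K : Type) (U : (K -> Prop) -> Prop) (B : (K -> Prop) -> Prop),
      infinite_type K -> witnesses_u U B ->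
      cf_gt_omega {A | B A}).
Proof.
  split.
  - intros K U B HK HU Hunif [HB Hmin]. split.
    + exact (base_infinite K U B HK HU Hunif HB).
    + intros P HP. exact (main_cf K U B HU HB Hmin P HP).
  - intros K U B HK [HU [Hunif [HB Hmin]]]. split.
    + exact (base_infinite K U B HK HU Hunif HB).
    + intros P HP. apply (main_cf K U B HU HB); [|exact HP].
      intros B' HB'. exact (Hmin U B' HU Hunif HB').
Qed.
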